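(* Let $D$ be an integral domain, $\mathfrak{m}$ a maximal $w$-ideal of $D$, and $M$ a torsion-free $D$-module which is a $w$-module. Then the following are equivalent: (1) $M$ is an $\mathfrak{m}$-SM-module; (2) $M_{\mathfrak{m}}$ is a Noetherian $D_{\mathfrak{m}}$-module and for every nonzero finitely generated $D$-submodule $L$ of $M$ there exists $s\in D\setminus\mathfrak{m}$ such that $(L_w)_{\mathfrak{m}}\cap M=L_w:s$.
   Context: Let $K$ be the quotient field of $D$; $I_v=(I^{-1})^{-1}$ with $I^{-1}=\{a\in K\mid aI\subseteq D\}$; $\mathrm{GV}(D)$ is the set of finitely generated ideals $J$ with $J_v=D$. For a torsion-free module $N$, $N_w=\{x\in N\otimes K\mid xJ\subseteq N\text{ for some }J\in\mathrm{GV}(D)\}$; $N$ is a $w$-module if $N_w=N$; a $w$-ideal is an ideal that is a $w$-module, and a maximal $w$-ideal is a proper $w$-ideal maximal among proper $w$-ideals. A submodule $N$ of $M$ is $S$-$w$-finite if there exist $s\in S$ and a finitely generated submodule $F$ of $M$ with $Ns\subseteq F_w\subseteq N_w$; a $w$-module $M$ is an $S$-SM-module if every $w$-submodule (submodule $L$ with $L_w=L$) is $S$-$w$-finite. $M$ is an $\mathfrak{m}$-SM-module if it is an $S$-SM-module for $S=D\setminus\mathfrak{m}$. For $r\in D$ and a submodule $L'$, $L':r=\{x\in M\mid xr\in L'\}$. The intersection is taken in $M_{\mathfrak{m}}$ with $M$ identified with its image. *)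

(* Defs.v *)
From HB Require Import structures.
From mathcomp Require Import all_boot all_order all_algebra.
Set Implicit Arguments. Unset Strict Implicit. Unset Printing Implicit Defensive.
Import Order.TTheory GRing.Theory Num.Theory.
Local Open Scope ring_scope.

(* D : an integral domain, K = {fraction D} its quotient field.
   A torsion-free D-module M is modelled as a D-submodule of a K-vector space V
   (e.g. V = M (x)_D K); all constructions (N (x) K, N_w, M_m, ...) are then
   computed inside V. *)

Definition tof (D : idomainType) (d : D) : {fraction D} := @FracField.tofrac D d.

Definition is_ideal (D : idomainType) (I : D -> Prop) : Prop :=
  I 0 /\ (forall x y, I x -> I y -> I (x + y)) /\ (forall r x, I x -> I (r * x)).

Definition ideal_span (D : idomainType) (s : seq D) : D -> Prop :=
  fun x => exists c : 'I_(size s) -> D, x = \sum_(i < size s) c i * s`_i.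

Definition fg_ideal (D : idomainType) (J : D -> Prop) : Prop :=
  exists s : seq D, forall x, J x <-> ideal_span s x.

Definition frac_inv (D : idomainType) (A : {fraction D} -> Prop) : {fraction D} -> Prop :=
  fun a => forall x, A x -> exists d : D, a * x = tof d.

Definition vclos (D : idomainType) (I : D -> Prop) : {fraction D} -> Prop :=
  frac_inv (frac_inv (fun x => exists i, I i /\ x = tof i)).

Definition GV (D : idomainType) (J : D -> Prop) : Prop :=
  fg_ideal J /\ (forall a, vclos J a <-> exists d : D, a = tof d).

Section Mods.
Variables (D : idomainType) (V : lmodType {fraction D}).

Definition Dsubmod (N : V -> Prop) : Prop :=
  N 0 /\ (forall x y, N x -> N y -> N (x + y)) /\ (forall (d : D) x, N x -> N (tof d *: x)).

Definition subsetV (A B : V -> Prop) : Prop := forall x, A x -> B x.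
Definition eqV (A B : V -> Prop) : Prop := forall x, A x <-> B x.

Definition Dspan (gs : seq V) : V -> Prop :=
  fun x => exists c : 'I_(size gs) -> D, x = \sum_(i < size gs) tof (c i) *: gs`_i.

Definition fg_submod_of (M F : V -> Prop) : Prop :=
  exists gs : seq V, (forall i, (i < size gs)%N -> M gs`_i) /\ eqV F (Dspan gs).

(* image of N (x)_D K in V: elements x with d x in N for some nonzero d *)
Definition tensK (N : V -> Prop) : V -> Prop :=
  fun x => exists d : D, d != 0 /\ N (tof d *: x).

Definition wclos (N : V -> Prop) : V -> Prop :=
  fun x => tensK N x /\ exists J : D -> Prop, GV J /\ forall j, J j -> N (tof j *: x).

Definition w_module (N : V -> Prop) : Prop := eqV (wclos N) N.

Definition Sw_finite (S : D -> Prop) (M N : V -> Prop) : Prop :=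
  exists s : D, S s /\ exists F : V -> Prop, fg_submod_of M F /\
    subsetV (fun x => exists y, N y /\ x = tof s *: y) (wclos F) /\
    subsetV (wclos F) (wclos N).

Definition S_SM_module (S : D -> Prop) (M : V -> Prop) : Prop :=
  w_module M /\
  forall L : V -> Prop, Dsubmod L -> subsetV L M -> eqV (wclos L) L -> Sw_finite S M L.

(* localization N_m = {y / s | y in N, s notin m}, computed inside V *)
Definition loc (m : D -> Prop) (N : V -> Prop) : V -> Prop :=
  fun x => exists s : D, ~ m s /\ N (tof s *: x).

Definition locring (m : D -> Prop) : {fraction D} -> Prop :=
  fun a => exists d s : D, ~ m s /\ a = tof d / tof s.

Definition Dm_submod (m : D -> Prop) (N : V -> Prop) : Prop :=
  N 0 /\ (forall x y, N x -> N y -> N (x + y)) /\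
  (forall a x, locring m a -> N x -> N (a *: x)).

Definition Dm_fg (m : D -> Prop) (N : V -> Prop) : Prop :=
  exists gs : seq V, forall x, N x <->
    exists c : 'I_(size gs) -> {fraction D},
      (forall i, locring m (c i)) /\ x = \sum_(i < size gs) c i *: gs`_i.

Definition Noetherian_loc (m : D -> Prop) (M : V -> Prop) : Prop :=
  forall N : V -> Prop, Dm_submod m N -> subsetV N (loc m M) -> Dm_fg m N.

Definition colon (M L' : V -> Prop) (r : D) : V -> Prop :=
  fun x => M x /\ L' (tof r *: x).
End Mods.

(* w-ideals: ideals I of D with I_w = I, computed in K viewed as a K-vector space *)
Definition idealK (D : idomainType) (I : D -> Prop) : {fraction D}^o -> Prop :=
  fun x => exists i, I i /\ x = tof i.

Definition w_ideal (D : idomainType) (I : D -> Prop) : Prop :=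
  is_ideal I /\ w_module (idealK I).

Definition proper_ideal (D : idomainType) (I : D -> Prop) : Prop := exists d : D, ~ I d.

Definition max_w_ideal (D : idomainType) (m : D -> Prop) : Prop :=
  w_ideal m /\ proper_ideal m /\
  forall I : D -> Prop, w_ideal I -> proper_ideal I ->
    (forall x, m x -> I x) -> forall x, I x -> m x.

(* Main.v *)
Require Import Defs.
From HB Require Import structures.
From mathcomp Require Import all_boot all_order all_algebra.
From mathcomp Require Import ring.
From Stdlib Require Import Classical.
Set Implicit Arguments. Unset Strict Implicit.
Import GRing.Theory.
Local Open Scope ring_scope.

Section Basic.
Variable D : idomainType.
Local Notation K := {fraction D}.

Lemma tofM (a b : D) : tof (a * b) = tof a * tof b.
Proof. exact: rmorphM. Qed.
Lemma tofD (a b : D) : tof (a + b) = tof a + tof b.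
Proof. exact: rmorphD. Qed.
Lemma tof1 : tof (1 : D) = 1.
Proof. exact: rmorph1. Qed.
Lemma tof0 : tof (0 : D) = 0.
Proof. exact: rmorph0. Qed.
Lemma tof_inj (a b : D) : tof a = tof b -> a = b.
Proof. by move=> h; apply/eqP; rewrite -(tofrac_eq a b); apply/eqP. Qed.
Lemma tof_neq0 (a : D) : a != 0 -> tof a != 0.
Proof. by move=> h; rewrite /tof tofrac_eq0. Qed.

Lemma idealKE (I : D -> Prop) (x : D) : idealK I (tof x) <-> I x.
Proof.
split; [by case=> i [Ii /tof_inj ->] | by move=> Ix; exists x].
Qed.

Lemma GV_full : GV (fun _ : D => True).
Proof.
split.
  exists [:: 1] => x; split => // _.
  by exists (fun _ => x); rewrite big_ord1 /= mulr1.
move=> a; split.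
  move=> /(_ 1) []; last by move=> d; rewrite mulr1 => ->; exists d.
  by move=> y [i [_ ->]]; exists i; rewrite mul1r.
move=> [d ->] x Hx.
have [e He] := Hx (tof d) (ex_intro _ d (conj I erefl)).
by exists e; rewrite mulrC.
Qed.

Variable V : lmodType K.

Lemma wclos_ext (N : V -> Prop) : Dsubmod N -> subsetV N (wclos N).
Proof.
move=> [N0 [ND NZ]] x Nx; split.
  by exists 1; split; [exact: oner_neq0 | rewrite tof1 scale1r].
by exists (fun _ => True); split; [exact: GV_full | move=> j _; apply: NZ].
Qed.

Lemma wclos_mono (A B : V -> Prop) : subsetV A B -> subsetV (wclos A) (wclos B).
Proof.
move=> AB x [[d [dn Ad]] [J [GJ HJ]]]; split.
  by exists d; split => //; apply: AB.
by exists J; split => // j Jj; apply: AB; apply: HJ.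
Qed.

Lemma Dsubmod_eqV (A B : V -> Prop) : eqV A B -> Dsubmod B -> Dsubmod A.
Proof.
move=> e [B0 [BD BZ]]; split; first exact/e.
split; first by move=> x y /e Ax /e Ay; apply/e; apply: BD.
by move=> d x /e Bx; apply/e; apply: BZ.
Qed.

Lemma D_sum (N : V -> Prop) n (c : 'I_n -> D) (g : 'I_n -> V) :
  Dsubmod N -> (forall i, N (g i)) -> N (\sum_(i < n) tof (c i) *: g i).
Proof.
move=> [N0 [ND NZ]] Hg; apply: (big_ind N) => // i _; exact: NZ.
Qed.

Lemma Dm_sum (m : D -> Prop) (N : V -> Prop) n (c : 'I_n -> K) (g : 'I_n -> V) :
  Dm_submod m N -> (forall i, locring m (c i)) -> (forall i, N (g i)) ->
  N (\sum_(i < n) c i *: g i).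
Proof.
move=> [N0 [ND NZ]] Hc Hg; apply: (big_ind N) => // i _; exact: NZ.
Qed.

Lemma sum_delta n (g : 'I_n -> V) (i : 'I_n) :
  \sum_(j < n) (if j == i then 1 else 0 : K) *: g j = g i.
Proof.
rewrite (bigD1 i) //= eqxx scale1r big1 ?addr0 // => j /negbTE ->.
by rewrite scale0r.
Qed.

Lemma sum_deltaD n (g : 'I_n -> V) (i : 'I_n) :
  \sum_(j < n) tof (if j == i then 1 else 0 : D) *: g j = g i.
Proof.
rewrite (bigD1 i) //= eqxx tof1 scale1r big1 ?addr0 // => j /negbTE ->.
by rewrite tof0 scale0r.
Qed.

Lemma Dspan_mem (gs : seq V) (i : 'I_(size gs)) : Dspan gs gs`_i.
Proof. by exists (fun j => if j == i then 1 else 0); rewrite sum_deltaD. Qed.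

Lemma Dspan_submod (gs : seq V) : Dsubmod (Dspan gs).
Proof.
split; first by exists (fun _ => 0); rewrite big1 // => i _; rewrite tof0 scale0r.
split.
  move=> x y [c ->] [c' ->]; exists (fun i => c i + c' i).
  by rewrite -big_split /=; apply: eq_bigr => i _; rewrite tofD scalerDl.
move=> d x [c ->]; exists (fun i => d * c i).
by rewrite scaler_sumr; apply: eq_bigr => i _; rewrite scalerA tofM.
Qed.

End Basic.
Section MaxW.
Variable D : idomainType.
Local Notation K := {fraction D}.
Variable m : D -> Prop.
Hypothesis Hm : max_w_ideal m.

Lemma m_ideal : is_ideal m.
Proof. by case: Hm => [[]]. Qed.
Lemma m_w : w_module (idealK m).
Proof. by case: Hm => [[]]. Qed.
Lemma m0 : m 0.
Proof. by case: m_ideal. Qed.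
Lemma mM r x : m x -> m (r * x).
Proof. by case: m_ideal => _ [_]; apply. Qed.
Lemma m_not1 : ~ m 1.
Proof.
case: Hm => _ [[d nd] _] m1; apply: nd; rewrite -(mulr1 d); exact: mM.
Qed.
Lemma notm_neq0 s : ~ m s -> s != 0.
Proof. by move=> h; apply/eqP => e; apply: h; rewrite e; exact: m0. Qed.
Lemma tof_notm s : ~ m s -> tof s != 0.
Proof. by move/notm_neq0/tof_neq0. Qed.

Lemma idealK_submod (I : D -> Prop) : is_ideal I -> Dsubmod (V:=K^o) (idealK I).
Proof.
move=> [I0 [ID IM]]; split; first by exists 0; rewrite tof0.
split; first by move=> _ _ [i [Ii ->]] [j [Ij ->]]; exists (i + j); rewrite tofD; split => //; apply: ID.
by move=> d _ [i [Ii ->]]; exists (d * i); split; [apply: IM | rewrite tofM].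
Qed.

Lemma m_prime a b : ~ m a -> ~ m b -> ~ m (a * b).
Proof.
move=> ma mb mab.
pose I := fun x => m (a * x).
have II : is_ideal I.
  split; first by rewrite /I mulr0; exact: m0.
  split; last by move=> r x; rewrite /I mulrCA; apply: mM.
  move=> x y; rewrite /I mulrDr; case: m_ideal => _ [+ _]; apply.
have wI : w_module (idealK I).
  move=> x; split; last by apply: wclos_ext; exact: idealK_submod.
  move=> [[d [dn0 [i1 [Ii1 e1]]]] [J [GVJ HJ]]].
  have [x0 ex] : exists x0, x = tof x0.
    have := (GVJ.2 (tof 1)).2 (ex_intro _ 1 erefl) x.
    case; last by move=> d0; rewrite tof1 mul1r => ->; exists d0.
    move=> y [i [Ji ->]].
    have [i2 [_ e2]] := HJ i Ji.
    by exists i2; rewrite mulrC.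
  subst x; apply/idealKE; rewrite /I.
  apply: (proj1 (idealKE m _)); apply: (proj1 (m_w _)); split.
    exists d; split => //; exists (a * i1); split => //.
    move: e1; rewrite /GRing.scale /= -!tofM => /tof_inj <-.
    by congr tof; rewrite mulrCA.
  exists J; split => // j Jj.
  have [i2 [Ii2 e2]] := HJ j Jj.
  exists (a * i2); split => //.
  move: e2; rewrite /GRing.scale /= -!tofM => /tof_inj <-.
  by congr tof; rewrite mulrCA.
case: Hm => _ [_ Hmax].
apply: mb; apply: (Hmax I) => //.
- by exists 1; rewrite /I mulr1.
- by move=> x mx; rewrite /I; apply: mM.
Qed.

Variable V : lmodType K.

Lemma lemmaA (N : V -> Prop) : subsetV (wclos N) (loc m N).
Proof.
move=> x [[d [dn0 Nd]] [J [GVJ HJ]]].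
case: (classic (m d)) => md; last by exists d.
case: (classic (exists j, J j /\ ~ m j)) => [[j [Jj mj]]|nJ].
  by exists j; split => //; apply: HJ.
have Jm : forall j, J j -> m j.
  by move=> j Jj; apply: NNPP => mj; apply: nJ; exists j.
exfalso.
case: (classic (exists j, J j /\ j != 0)) => [[j [Jj jn0]] | nJ0].
  have : idealK m (1 : K^o).
    apply: (proj1 (m_w _)); split.
      exists j; split => //; exists j; split; first exact: Jm.
      by rewrite /GRing.scale /= mulr1.
    exists J; split => // j' Jj'; exists j'; split; first exact: Jm.
    by rewrite /GRing.scale /= mulr1.
  rewrite -tof1 => /idealKE; exact: m_not1.
have allD : forall k : K, exists e, k = tof e.
  move=> k.
  have := (GVJ.2 (tof 1)).2 (ex_intro _ 1 erefl) k.
  case; last by move=> e; rewrite tof1 mul1r => ->; exists e.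
  move=> y [i [Ji ->]].
  have -> : i = 0.
    apply: NNPP => /eqP ne; apply: nJ0; exists i; split => //.
  by exists 0; rewrite tof0 mulr0.
have [e he] := allD (tof d)^-1.
apply: m_not1.
have -> : 1 = e * d.
  apply: tof_inj; rewrite tof1 tofM -he mulVf //; exact: tof_neq0.
exact: mM.
Qed.

Lemma loc_submod (N : V -> Prop) : Dsubmod N -> Dm_submod m (loc m N).
Proof.
move=> [N0 [ND NZ]]; split; first by exists 1; split; [exact: m_not1 | rewrite scaler0].
split.
  move=> x y [s [ms Ns]] [t [mt Nt]]; exists (s * t); split; first exact: m_prime.
  rewrite scalerDr; apply: ND.
    by rewrite mulrC tofM -scalerA; apply: NZ.
  by rewrite tofM -scalerA; apply: NZ.
move=> _ x [d [s [ms ->]]] [t [mt Nt]]; exists (s * t); split; first exact: m_prime.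
rewrite scalerA.
have -> : tof (s * t) * (tof d / tof s) = tof d * tof t.
  rewrite tofM; have := tof_notm ms; move: (tof s) => u hu; field; exact: hu.
by rewrite -scalerA; apply: NZ.
Qed.

Lemma loc_D (N : V -> Prop) : Dsubmod N -> Dsubmod (loc m N).
Proof.
move=> /loc_submod [h0 [hD hZ]]; split => //; split => // d x; apply: hZ.
by exists d, 1; split; [exact: m_not1 | rewrite tof1 divr1].
Qed.

Lemma loc_loc (N : V -> Prop) : Dsubmod N -> subsetV (loc m (loc m N)) (loc m N).
Proof.
move=> _ x [s [ms [t [mt Nt]]]]; exists (t * s); split; first exact: m_prime.
by rewrite tofM -scalerA.
Qed.

Lemma loc_mono (A B : V -> Prop) : subsetV A B -> subsetV (loc m A) (loc m B).
Proof. by move=> AB x [s [ms As]]; exists s; split => //; apply: AB. Qed.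

Lemma loc_ext (N : V -> Prop) : subsetV N (loc m N).
Proof. by move=> x Nx; exists 1; split; [exact: m_not1 | rewrite tof1 scale1r]. Qed.

Lemma unif_t (N : V -> Prop) (HN : Dsubmod N) (gs : seq V) :
  (forall i, (i < size gs)%N -> loc m N gs`_i) ->
  exists t, ~ m t /\ forall i, (i < size gs)%N -> N (tof t *: gs`_i).
Proof.
elim: gs => [|g gs IH] H.
  by exists 1; split; [exact: m_not1 | ].
have [t [mt Ht]] := IH (fun i hi => H i.+1 hi).
have [u [mu Nu]] := H 0%N erefl.
exists (u * t); split; first exact: m_prime.
case: HN => _ [_ NZ].
case=> [|i] hi /=.
  by rewrite mulrC tofM -scalerA; apply: NZ.
by rewrite tofM -scalerA; apply: NZ; apply: Ht.
Qed.

End MaxW.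

Theorem proposition3p3 (D : idomainType) (V : lmodType {fraction D})
    (m : D -> Prop) (M : V -> Prop) :
  max_w_ideal m -> Dsubmod M -> w_module M ->
  (S_SM_module (fun s => ~ m s) M <->
   (Noetherian_loc m M /\
    forall L : V -> Prop, fg_submod_of M L -> (exists x, L x /\ x <> 0) ->
      exists s : D, ~ m s /\
        forall x, (loc m (wclos L) x /\ M x) <-> colon M (wclos L) s x)).
Proof.
move=> Hm HM wM.
have wMs : subsetV (wclos M) M by move=> x /wM.
have Mw : forall A, subsetV A M -> subsetV (wclos A) M.
  by move=> A AM x /(wclos_mono AM); apply: wMs.
split.
- move=> [_ SM]; split.
  + move=> N HN NsubM.
    pose L := fun x => N x /\ M x.
    have [N0 [ND NZ]] := HN.
    have [M0 [MD MZ]] := HM.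
    have locD : forall d : D, locring m (tof d).
      by move=> d; exists d, 1; split; [exact: m_not1 | rewrite tof1 divr1].
    have LD : Dsubmod L.
      split; first by [].
      split; first by move=> x y [Nx Mx] [Ny My]; split; [apply: ND | apply: MD].
      by move=> d x [Nx Mx]; split; [apply: NZ | apply: MZ].
    have Lw : eqV (wclos L) L.
      move=> x; split; last by apply: wclos_ext.
      move=> Hx; split; last by apply: (Mw L) => // y [].
      have [t [mt [Nt _]]] := lemmaA Hm Hx.
      have -> : x = (tof t)^-1 *: (tof t *: x).
        by rewrite scalerA mulVf ?scale1r //; exact: (tof_notm Hm).
      apply: NZ => //; exists 1, t; split; [done | by rewrite tof1 mul1r].
    have [s [ms [F [[gs [gsM eF]] [H1 H2]]]]] := SM L LD (fun x => @proj2 _ _) Lw.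
    have FD : Dsubmod F := Dsubmod_eqV eF (Dspan_submod gs).
    exists gs => x; split.
      move=> Nx.
      have [t [mt Mt]] := NsubM x Nx.
      have Lt : L (tof t *: x) by split => //; apply: NZ.
      have Ws : wclos F (tof s *: (tof t *: x)) by apply: H1; exists (tof t *: x).
      have [u [mu /eF [c ec]]] := lemmaA Hm Ws.
      have mP : ~ m (u * s * t) by apply: m_prime => //; apply: m_prime.
      exists (fun i => (tof (u * s * t))^-1 * tof (c i)); split.
        move=> i; exists (c i), (u * s * t); split; [done | by rewrite mulrC].
      rewrite -[LHS](scale1r) -(mulVf (tof_notm Hm mP)) -scalerA.
      have -> : tof (u * s * t) *: x = tof u *: (tof s *: (tof t *: x)).
        by rewrite !scalerA !tofM.
      by rewrite ec scaler_sumr; apply: eq_bigr => i _; rewrite scalerA.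
    move=> [c [Hc ->]]; apply: (Dm_sum HN) => // i.
    have : L gs`_i.
      by apply/Lw; apply: H2; apply: wclos_ext => //; apply/eF; apply: Dspan_mem.
    by case.
  + move=> L [gs [gsM eL]] _.
    have LD : Dsubmod L := Dsubmod_eqV eL (Dspan_submod gs).
    have [M0 [MD MZ]] := HM.
    pose L2 := fun x => loc m L x /\ M x.
    have L2D : Dsubmod L2.
      have [h0 [hD hZ]] := loc_D Hm LD.
      split; first by [].
      split; first by move=> x y [Nx Mx] [Ny My]; split; [apply: hD | apply: MD].
      by move=> d x [Nx Mx]; split; [apply: hZ | apply: MZ].
    have L2w : eqV (wclos L2) L2.
      move=> x; split; last by apply: wclos_ext.
      move=> Hx; split; last by apply: (Mw L2) => // y [].
      apply: (loc_loc Hm LD); apply: (loc_mono (B := loc m L)) (lemmaA Hm Hx).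
      by move=> y [].
    have [s [ms [F [[fs [fsM eF]] [H1 H2]]]]] := SM L2 L2D (fun x => @proj2 _ _) L2w.
    have FD : Dsubmod F := Dsubmod_eqV eF (Dspan_submod fs).
    have [t [mt Ht]] : exists t, ~ m t /\ forall i, (i < size fs)%N -> L (tof t *: fs`_i).
      apply: unif_t => // i hi.
      have : L2 fs`_i.
        apply/L2w; apply: H2; apply: wclos_ext => //; apply/eF.
        exact: (Dspan_mem (Ordinal hi)).
      by case.
    have tF : forall z, F z -> L (tof t *: z).
      move=> z /eF [c ->]; rewrite scaler_sumr.
      have -> : \sum_(i < size fs) tof t *: (tof (c i) *: fs`_i)
              = \sum_(i < size fs) tof (c i) *: (tof t *: fs`_i).
        by apply: eq_bigr => i _; rewrite !scalerA mulrC.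
      by apply: D_sum => // i; apply: Ht.
    have tW : forall y, wclos F y -> wclos L (tof t *: y).
      move=> y [[d [dn Fd]] [J [GJ HJ]]]; split.
        by exists d; split => //; rewrite scalerA mulrC -scalerA; apply: tF.
      by exists J; split => // j Jj; rewrite scalerA mulrC -scalerA; apply: tF; apply: HJ.
    exists (t * s); split; first exact: m_prime.
    move=> x; split.
      move=> [[u [mu Wu]] Mx]; split => //.
      have [u' [mu' Lu']] := lemmaA Hm Wu.
      have L2x : L2 x.
        split => //; exists (u' * u); split; first exact: m_prime.
        by rewrite tofM -scalerA.
      have := tW _ (H1 _ (ex_intro _ x (conj L2x erefl))).
      by rewrite scalerA -tofM.
    move=> [Mx Hw]; split => //; exists (t * s); split => //; exact: m_prime.
- move=> [Noeth Hfg]; split => // L LD LM Lw.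
  have [gs Hgs] := Noeth (loc m L) (loc_submod Hm LD) (loc_mono LM).
  have gsL : forall i, (i < size gs)%N -> loc m L gs`_i.
    move=> i hi; apply/Hgs.
    exists (fun j => if j == Ordinal hi then 1 else 0); split.
      move=> j; case: (j == Ordinal hi).
        by exists 1, 1; split; [exact: m_not1 | rewrite tof1 divr1].
      by exists 0, 1; split; [exact: m_not1 | rewrite tof0 mul0r].
    by rewrite sum_delta.
  have [t [mt Ht]] := unif_t Hm LD gsL.
  pose fs := map (fun y => tof t *: y) gs.
  pose F := Dspan fs.
  have FD : Dsubmod F := Dspan_submod fs.
  have fsE : forall i, (i < size gs)%N -> fs`_i = tof t *: gs`_i.
    by move=> i hi; rewrite (nth_map 0).
  have fgF : fg_submod_of M F.
    exists fs; split => // i; rewrite size_map => hi.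
    by rewrite fsE //; apply: LM; apply: Ht.
  have FL : subsetV F L.
    move=> z [c ->]; apply: D_sum => // i.
    have hi : (i < size gs)%N by rewrite -(size_map (fun y => tof t *: y) gs) ltn_ord.
    by rewrite fsE //; apply: Ht.
  have LlocF : forall y, L y -> loc m F y.
    move=> y Ly.
    have [c [Hc ->]] := (Hgs y).1 (loc_ext Hm Ly).
    apply: Dm_sum => //; first exact: loc_submod.
    move=> i; exists t; split => //.
    have hi : (i < size fs)%N by rewrite size_map.
    by rewrite -fsE //; exact: (Dspan_mem (Ordinal hi)).
  case: (classic (exists x, F x /\ x <> 0)) => [nz | z].
    have [s [ms Hs]] := Hfg F fgF nz.
    exists s; split => //; exists F; split => //; split; last exact: wclos_mono.
    move=> _ [y [Ly ->]].
    have HH : loc m (wclos F) y /\ M y.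
      split; last exact: LM.
      by apply: (loc_mono (A := F)); [apply: wclos_ext | apply: LlocF].
    by case: ((Hs y).1 HH).
  exists 1; split; first exact: m_not1.
  exists F; split => //; split; last exact: wclos_mono.
  move=> _ [y [Ly ->]].
  have [u [mu Fu]] := LlocF y Ly.
  have y0 : y = 0.
    have : tof u *: y = 0 by apply: NNPP => ne; apply: z; exists (tof u *: y).
    by move/eqP; rewrite scaler_eq0 (negbTE (tof_notm Hm mu)) /= => /eqP.
  by rewrite y0 scaler0; apply: wclos_ext => //; case: FD.
Qed.
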